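(* For integers $n\ge 2$ and $0\le i\le n$, let $f_{n,i}$ be the number of paths in $\mathrm{Bal}^*(n,i)$ containing at least one $D$ step. Then $$f_{n,i}=\binom{2n-2}{n-i-1}-\binom{2n-2}{n-i-2}-\binom{n-2}{n-i-1}.$$
   Context: Binomial coefficients $\binom{a}{c}$ with $a\ge 0$ are $0$ if $c<0$ or $c>a$. $\mathrm{Bal}^*(n,i)$ is the set of lattice paths from $(0,0)$ to $(n,i)$ with steps $U=(1,1)$, $D=(1,-1)$ and horizontal steps $(1,0)$ colored umber or denim, never going below the $x$-axis, such that no umber step occurs at height $0$ and no denim step occurs before the first $D$ step. *)

(* Defs.v *)
From HB Require Import structures.
From mathcomp Require Import all_boot all_order all_algebra.
Set Implicit Arguments. Unset Strict Implicit. Unset Printing Implicit Defensive.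
Import GRing.Theory Num.Theory.

(* Steps of the lattice paths: U = (1,1), D = (1,-1),
   Hu = horizontal step (1,0) coloured umber, Hd = horizontal coloured denim. *)
Inductive step := U | D | Hu | Hd.

Definition step_to_ord (s : step) : 'I_4 :=
  match s with U => inord 0 | D => inord 1 | Hu => inord 2 | Hd => inord 3 end.
Definition ord_to_step (o : 'I_4) : step :=
  match val o with 0 => U | 1 => D | 2 => Hu | _ => Hd end.
Lemma step_to_ordK : cancel step_to_ord ord_to_step.
Proof. by case; rewrite /ord_to_step /= inordK. Qed.
HB.instance Definition _ := Finite.copy step (can_type step_to_ordK).

Fixpoint balstar_from (h : nat) (seenD : bool) (s : seq step) (i : nat) : bool :=
  match s with
  | [::] => h == i
  | U :: s' => balstar_from h.+1 seenD s' i
  | D :: s' => (0 < h) && balstar_from h.-1 true s' i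
  | Hu :: s' => (0 < h) && balstar_from h seenD s' i
  | Hd :: s' => seenD && balstar_from h seenD s' i
  end.

Definition in_BalStar (n i : nat) (p : n.-tuple step) : bool :=
  balstar_from 0 false p i.

Definition f_count (n i : nat) : nat :=
  #|[set p : n.-tuple step | @in_BalStar n i p && (D \in (p : seq step))]|.

Definition binz (a : nat) (c : int) : int :=
  match c with Posz k => ('C(a, k))%:Z | Negz _ => 0 end.

(* Main.v *)
Require Import Defs.
From mathcomp Require Import all_boot all_order all_algebra.
From mathcomp Require Import zify ring.
Import GRing.Theory Num.Theory.

Lemma inD_cons (x : step) (s : seq step) :
  (D \in x :: s) = (x == D) || (D \in s).
Proof. by rewrite in_cons eq_sym. Qed.
Lemma eqUD : (U == D) = false. Proof. by apply/eqP. Qed.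
Lemma eqHuD : (Hu == D) = false. Proof. by apply/eqP. Qed.
Lemma eqHdD : (Hd == D) = false. Proof. by apply/eqP. Qed.
Lemma eqDD : (D == D) = true. Proof. exact: eqxx. Qed.

Lemma sum_tupleS (m : nat) (F : seq step -> nat) :
  \sum_(t : m.+1.-tuple step) F t = \sum_(x : step) \sum_(t : m.-tuple step) F (x :: t).
Proof.
rewrite pair_big /=.
rewrite (reindex (fun p : step * m.-tuple step => [tuple of p.1 :: p.2])) /=.
  by [].
exists (fun t : m.+1.-tuple step => (thead t, [tuple of behead t])) => [[x t] _|t _] /=.
  by congr pair; apply: val_inj.
by rewrite [in RHS](tuple_eta t).
Qed.

Lemma sum_step (F : step -> nat) : \sum_(x : step) F x = F U + F D + F Hu + F Hd.
Proof.
rewrite (reindex ord_to_step) /=.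
  by rewrite !big_ord_recl big_ord0 /= addn0 !addnA.
exists step_to_ord => [o _|x _]; last exact: step_to_ordK.
apply: val_inj; case: o => [[|[|[|[|k]]]] Hk] //=; rewrite ?inordK //.
Qed.

Definition cnt m (P : seq step -> bool) := \sum_(t : m.-tuple step) (P t : nat).

Lemma cnt0 P : cnt 0 P = P [::].
Proof. by rewrite /cnt (big_pred1 [tuple]) // => t; rewrite /= (tuple0 t); apply/esym/eqP. Qed.

Lemma cntS m P : cnt m.+1 P =
  cnt m (fun s => P (U :: s)) + cnt m (fun s => P (D :: s))
  + cnt m (fun s => P (Hu :: s)) + cnt m (fun s => P (Hd :: s)).
Proof. by rewrite /cnt (sum_tupleS m (fun s : seq step => (P s : nat))) sum_step. Qed.

Lemma cnt_ext m P Q : P =1 Q -> cnt m P = cnt m Q.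
Proof. by move=> PQ; apply: eq_bigr => t _; rewrite PQ. Qed.

Lemma cnt_false m : cnt m (fun _ => false) = 0.
Proof. by apply: big1. Qed.

Definition Fc m h i := cnt m (fun s => balstar_from h false s i && (D \in s)).
Definition Nc m h i := cnt m (fun s => balstar_from h false s i && (D \notin s)).
Definition Gc m h i := cnt m (fun s => balstar_from h true s i).

Lemma Fc0 h i : Fc 0 h i = 0. Proof. by rewrite /Fc cnt0 /= andbF. Qed.
Lemma Nc0 h i : Nc 0 h i = (h == i). Proof. by rewrite /Nc cnt0 /= andbT. Qed.
Lemma Gc0 h i : Gc 0 h i = (h == i). Proof. by rewrite /Gc cnt0. Qed.

Ltac simpD := rewrite ?inD_cons ?eqUD ?eqHuD ?eqHdD ?eqDD /=.

Lemma FcS0 m i : Fc m.+1 0 i = Fc m 1 i.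
Proof.
rewrite /Fc cntS /= !cnt_false !addn0; apply: cnt_ext => s; by simpD.
Qed.

Lemma FcS m h i : Fc m.+1 h.+1 i = Fc m h.+2 i + Gc m h i + Fc m h.+1 i.
Proof.
rewrite /Fc /Gc cntS /= !cnt_false !addn0.
congr (_ + _ + _); apply: cnt_ext => s; simpD; by rewrite ?andbT.
Qed.

Lemma NcS0 m i : Nc m.+1 0 i = Nc m 1 i.
Proof.
rewrite /Nc cntS /= !cnt_false !addn0; apply: cnt_ext => s; by simpD.
Qed.

Lemma NcS m h i : Nc m.+1 h.+1 i = Nc m h.+2 i + Nc m h.+1 i.
Proof.
rewrite /Nc cntS /= !cnt_false !addn0.
have -> : cnt m (fun s => balstar_from h true s i && (D \notin D :: s)) = 0.
  rewrite -(cnt_false m); apply: cnt_ext => s; by simpD; rewrite andbF.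
rewrite addn0; congr (_ + _); apply: cnt_ext => s; by simpD.
Qed.

Lemma GcS0 m i : Gc m.+1 0 i = Gc m 1 i + Gc m 0 i.
Proof. by rewrite /Gc cntS /= !cnt_false !addn0. Qed.

Lemma GcS m h i : Gc m.+1 h.+1 i = Gc m h.+2 i + Gc m h i + Gc m h.+1 i + Gc m h.+1 i.
Proof. by rewrite /Gc cntS /=. Qed.

Lemma key m : forall h i,
  Fc m h.+1 i + (if h is 0 then 0 else Fc m h i) + Nc m h i = Gc m h i.
Proof.
elim: m => [|m IH] h i.
  by rewrite !Fc0 Nc0 Gc0; case: h.
case: h => [|k].
  have := IH 1 i; rewrite FcS NcS0 GcS0 /=; lia.
have := IH k.+2 i; have := IH k.+1 i; rewrite FcS FcS NcS GcS /=.
case: k => [|k] /=; lia.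
Qed.

Local Open Scope ring_scope.

Lemma binz_neg a c : c < 0 -> binz a c = 0.
Proof. by case: c. Qed.
Lemma binz_big a c : (a%:Z < c) -> binz a c = 0.
Proof. case: c => //= k; rewrite ltz_nat => H; by rewrite bin_small. Qed.

Lemma pascal a c : binz a.+1 c = binz a c + binz a (c - 1).
Proof.
case: c => [[|k]|j].
- by rewrite /= !bin0.
- have -> : (k.+1%:Z - 1 = k%:Z) by lia.
  by rewrite /= binS PoszD addrC.
- rewrite !binz_neg ?addr0 //; lia.
Qed.

Lemma pascal2 a c : binz a.+2 c = binz a c + binz a (c - 1) *+ 2 + binz a (c - 2).
Proof.
rewrite pascal !pascal -!addrA; congr (_ + _).
Qed.

Lemma binz0 c : binz 0 c = (c == 0)%:Z.
Proof. by case: c => [[|k]|j]. Qed.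

Definition gz m h i : int :=
  binz (2 * m) (m%:Z + i%:Z - h%:Z) - binz (2 * m) (m%:Z + i%:Z + h%:Z + 1).

Lemma lin0 (B : int -> int) x a1 a2 a3 a4 b1 b2 b3 b4 b5 b6 :
  a1 = x - 1 -> a2 = x + 2 -> a3 = x -> a4 = x + 1 -> b1 = x + 1 -> b2 = x ->
  b3 = x - 1 -> b4 = x + 2 -> b5 = x + 1 -> b6 = x ->
  B a1 - B a2 + (B a3 - B a4) = B b1 + B b2 *+ 2 + B b3 - (B b4 + B b5 *+ 2 + B b6).
Proof. move=> -> -> -> -> -> -> -> -> -> ->; rewrite mulr2n; ring. Qed.

Lemma lin1 (B : int -> int) x y a1 a2 a3 a4 a5 a6 a7 a8 b1 b2 b3 b4 b5 b6 :
  a1 = x - 2 -> a2 = y + 3 -> a3 = x -> a4 = y + 1 -> a5 = x - 1 -> a6 = y + 2 ->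
  a7 = x - 1 -> a8 = y + 2 ->
  b1 = x -> b2 = x - 1 -> b3 = x - 2 -> b4 = y + 3 -> b5 = y + 2 -> b6 = y + 1 ->
  B a1 - B a2 + (B a3 - B a4) + (B a5 - B a6) + (B a7 - B a8)
  = B b1 + B b2 *+ 2 + B b3 - (B b4 + B b5 *+ 2 + B b6).
Proof. do 14 move=> ->; rewrite mulr2n; ring. Qed.

Lemma Gz m : forall h i, (Gc m h i)%:Z = gz m h i.
Proof.
elim: m => [|m IH] h i.
  rewrite Gc0 /gz !binz0; case: eqP => [->|ne]; case: eqP; case: eqP; lia.
have e2 : (2 * m.+1 = (2 * m).+2)%N by lia.
case: h => [|k].
  rewrite GcS0 PoszD !IH /gz e2 !pascal2.
  apply: (@lin0 (binz (2 * m)) (m%:Z + i%:Z)); lia.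
rewrite GcS !PoszD !IH /gz e2 !pascal2.
apply: (@lin1 (binz (2 * m)) (m%:Z + i%:Z - k%:Z) (m%:Z + i%:Z + k%:Z)); lia.
Qed.

Lemma Nz m : forall h i, (Nc m h.+1 i)%:Z = binz m (i%:Z - h.+1%:Z).
Proof.
elim: m => [|m IH] h i.
  rewrite Nc0 binz0; case: eqP; case: eqP; lia.
rewrite NcS PoszD !IH pascal.
have -> : i%:Z - h.+1%:Z - 1 = i%:Z - h.+2%:Z by lia.
by rewrite addrC.
Qed.

Lemma binz_symE a c c' : c + c' = a%:Z -> binz a c = binz a c'.
Proof.
case: c => [k|j] H.
  have [ka|ak] := leqP k a.
    have -> : c' = (a - k)%N%:Z by lia.
    by rewrite /= bin_sub.
  rewrite (@binz_neg a c') /=; last lia.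
  by rewrite bin_small.
rewrite (@binz_big a c') //; lia.
Qed.

Lemma fF n i : f_count n i = Fc n 0 i.
Proof.
rewrite /f_count /Fc /cnt -sum1_card big_mkcond /=; apply: eq_bigr => t _.
by rewrite inE /in_BalStar; case: (_ && _).
Qed.

Theorem lemma15 (n i : nat) (hn : (2 <= n)%N) (hi : (i <= n)%N) :
  (f_count n i)%:Z =
    binz (2 * n - 2) (n%:Z - i%:Z - 1) - binz (2 * n - 2) (n%:Z - i%:Z - 2)
    - binz (n - 2) (n%:Z - i%:Z - 1).
Proof.
case: n hn hi => [|[|m]] // _ hi.
have e1 : (2 * m.+2 - 2 = 2 * m.+1)%N by lia.
have e2 : (m.+2 - 2 = m)%N by lia.
rewrite e1 e2 fF FcS0.
have := key m.+1 0 i; rewrite /= addn0 NcS0 => K.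
have -> : (Fc m.+1 1 i)%:Z = (Gc m.+1 0 i)%:Z - (Nc m 1 i)%:Z by lia.
rewrite Gz (Nz m 0 i) /gz.
congr (_ - _ - _); apply: binz_symE; lia.
Qed.
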